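(* Let $k\ge 1$ and $1\le m\le k$, and let $v_0,\pi_1,v_1,\dots,\pi_k$ be generated by Approximate Value Iteration with errors $\epsilon_1,\dots,\epsilon_{k-1}$ (for any choice of greedy policies). Let $\epsilon=\max_{1\le j<k}\operatorname{span}(\epsilon_j)$ (with $\epsilon=0$ if $k=1$). Let $\pi_{k,m}$ be the periodic non-stationary policy $\pi_k\,\pi_{k-1}\cdots\pi_{k-m+1}\,\pi_k\,\pi_{k-1}\cdots\pi_{k-m+1}\cdots$. Then $$\|v_*-v_{\pi_{k,m}}\|_\infty \le \frac{1}{1-\gamma^m}\left(\frac{\gamma-\gamma^k}{1-\gamma}\,\epsilon+\gamma^k\operatorname{span}(v_*-v_0)\right).$$
   Context: A Markov Decision Process with finite state space $S$, finite action space $A$, reward function $r(s,a)$, transition probabilities $p(s'|s,a)$ and discount factor $\gamma\in[0,1)$. For a (deterministic, stationary) policy $\pi:S\to A$, let $r_\pi(s)=r(s,\pi(s))$, let $P_\pi$ be the stochastic matrix $P_\pi(s,s')=p(s'|s,\pi(s))$, and let $T_\pi v=r_\pi+\gamma P_\pi v$ be the Bellman operator of $\pi$; $v_\pi$ is its unique fixed point (the expected $\gamma$-discounted total reward of $\pi$). The Bellman optimality operator is $Tv=\max_\pi T_\pi v$ (componentwise), $v_*$ is its fixed point (the optimal value), and a policy $\pi$ is greedy with respect to $v$ if $T_\pi v=Tv$. For a function $f:S\to\mathbb R$, $\operatorname{span}(f)=\max_s f(s)-\min_s f(s)$. Approximate Value Iteration: starting from an arbitrary $v_0:S\to\mathbb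 R$, for $j\ge 0$ pick any policy $\pi_{j+1}$ greedy with respect to $v_j$ and set $v_{j+1}=T_{\pi_{j+1}}v_j+\epsilon_{j+1}$, where $\epsilon_{j+1}:S\to\mathbb R$ are arbitrary error terms. A non-stationary policy $\sigma_0\sigma_1\sigma_2\cdots$ uses policy $\sigma_t$ at time $t$; its value is the expected $\gamma$-discounted total reward $v=\sum_{t\ge0}\gamma^t P_{\sigma_0}\cdots P_{\sigma_{t-1}} r_{\sigma_t}$. For the periodic policy $\pi_{k,m}$ this value satisfies $v_{\pi_{k,m}}=T_{\pi_k}T_{\pi_{k-1}}\cdots T_{\pi_{k-m+1}}v_{\pi_{k,m}}$. *)

(* Defs.v *)
From HB Require Import structures.
From mathcomp Require Import all_boot all_order all_algebra.
Set Implicit Arguments. Unset Strict Implicit. Unset Printing Implicit Defensive.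
Import Order.TTheory GRing.Theory Num.Theory.
Local Open Scope ring_scope.

Section MDP.
Variables (R : realFieldType) (S A : finType).

(* A finite MDP: rewards r, transition kernel p (p s a s' = p(s'|s,a)), discount gamma. *)
Record mdp := MDP {
  rew : S -> A -> R;
  trans : S -> A -> S -> R;
  gamma : R }.

Definition is_mdp (M : mdp) : Prop :=
  (forall s a s', 0 <= trans M s a s') /\
  (forall s a, \sum_(s' : S) trans M s a s' = 1) /\
  0 <= gamma M /\ gamma M < 1.

Definition qval (M : mdp) (v : S -> R) (s : S) (a : A) : R :=
  rew M s a + gamma M * \sum_(s' : S) trans M s a s' * v s'.

Definition Tpi (M : mdp) (pi : S -> A) (v : S -> R) : S -> R :=
  fun s => qval M v s (pi s).

Definition is_max_over (q : A -> R) (x : R) : Prop :=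
  (exists a, x = q a) /\ (forall a, q a <= x).

Definition is_Toptimal (M : mdp) (v w : S -> R) : Prop :=
  forall s, is_max_over (qval M v s) (w s).

Definition is_optimal_value (M : mdp) (vstar : S -> R) : Prop :=
  is_Toptimal M vstar vstar.

Definition greedy (M : mdp) (pi : S -> A) (v : S -> R) : Prop :=
  is_Toptimal M v (Tpi M pi v).

Definition avi_run (M : mdp) (k : nat) (v : nat -> S -> R) (pi : nat -> S -> A)
    (eps : nat -> S -> R) : Prop :=
  (forall j, (j < k)%N -> greedy M (pi j.+1) (v j)) /\
  (forall j, (j.+1 < k)%N -> v j.+1 = (fun s => Tpi M (pi j.+1) (v j) s + eps j.+1 s)).

Definition sup_norm (f : S -> R) : R := \big[Num.max/0]_(s : S) `|f s|.

(* fspan f = span f = max_s f s - min_s f s, written as max_{s,t} (f s - f t)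
   (the two coincide; both are 0 for an empty state space). *)
Definition fspan (f : S -> R) : R :=
  \big[Num.max/0]_(s : S) \big[Num.max/0]_(t : S) (f s - f t).

(* T_{pi_{k-m+1+i-1}} ... T_{pi_{k-m+1}} w ; for i = m this is
   T_{pi_k} T_{pi_{k-1}} ... T_{pi_{k-m+1}} w. *)
Fixpoint Tcycle (M : mdp) (pi : nat -> S -> A) (k m i : nat) (w : S -> R) : S -> R :=
  match i with
  | 0 => w
  | i'.+1 => Tpi M (pi (k - m + 1 + i')%N) (Tcycle M pi k m i' w)
  end.

(* value of the periodic non-stationary policy pi_{k,m}: the (unique) fixed point of
   T_{pi_k} ... T_{pi_{k-m+1}}. *)
Definition is_periodic_value (M : mdp) (pi : nat -> S -> A) (k m : nat) (w : S -> R) : Prop :=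
  w = Tcycle M pi k m m w.

End MDP.

(* Main.v *)
Require Import Defs.
From HB Require Import structures.
From mathcomp Require Import all_boot all_order all_algebra.
From mathcomp Require Import ring lra zify.
Import Order.TTheory GRing.Theory Num.Theory.
Set Implicit Arguments. Unset Strict Implicit. Unset Printing Implicit Defensive.
Local Open Scope ring_scope.

Lemma ex_min (R : realFieldType) (S : finType) (t0 : S) (f : S -> R) :
  exists t, forall u, f t <= f u.
Proof.
case: (@arg_minP _ _ S t0 predT f isT) => t _ H; exists t => u; exact: H.
Qed.
Lemma ex_max (R : realFieldType) (S : finType) (t0 : S) (f : S -> R) :
  exists t, forall u, f u <= f t.
Proof.
case: (@arg_maxP _ _ S t0 predT f isT) => t _ H; exists t => u; exact: H.
Qed.

Lemma sum_dist_le (R : realFieldType) (S : finType) (p f : S -> R) (b : R) :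
  (forall u, 0 <= p u) -> \sum_u p u = 1 -> (forall u, f u <= b) ->
  \sum_u p u * f u <= b.
Proof.
move=> p0 p1 fb.
apply: le_trans (ler_sum _ (fun u _ => ler_wpM2l (p0 u) (fb u))) _.
by rewrite -mulr_suml p1 mul1r.
Qed.

Lemma sum_dist_ge (R : realFieldType) (S : finType) (p f : S -> R) (a : R) :
  (forall u, 0 <= p u) -> \sum_u p u = 1 -> (forall u, a <= f u) ->
  a <= \sum_u p u * f u.
Proof.
move=> p0 p1 fb.
apply: le_trans _ (ler_sum _ (fun u _ => ler_wpM2l (p0 u) (fb u))).
by rewrite -mulr_suml p1 mul1r.
Qed.

Lemma sum_dist_addl (R : realFieldType) (S : finType) (p f : S -> R) (c : R) :
  \sum_u p u = 1 -> \sum_u p u * (c + f u) = c + \sum_u p u * f u.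
Proof.
move=> p1; under eq_bigr do rewrite mulrDr.
by rewrite big_split /= -mulr_suml p1 mul1r.
Qed.

Lemma pair_dist (R : realFieldType) (S : finType) (p q X Y : S -> R) (c : R) :
  (forall u, 0 <= p u) -> \sum_u p u = 1 ->
  (forall u, 0 <= q u) -> \sum_u q u = 1 ->
  (forall u w, X u + Y w <= c) ->
  \sum_u p u * X u + \sum_w q w * Y w <= c.
Proof.
move=> p0 p1 q0 q1 H.
rewrite addrC -(@sum_dist_addl R S p X _ p1).
apply: sum_dist_le => // u.
rewrite addrC -(@sum_dist_addl R S q Y _ q1).
by apply: sum_dist_le => // w; rewrite addrC.
Qed.

Lemma qval_diff (R : realFieldType) (S A : finType) (M : mdp R S A) x y s a :
  qval M x s a - qval M y s a = gamma M * \sum_u trans M s a u * (x u - y u).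
Proof.
rewrite /qval.
have -> : \sum_u trans M s a u * (x u - y u) =
  \sum_u trans M s a u * x u - \sum_u trans M s a u * y u.
  by rewrite -sumrB; apply: eq_bigr => u _; rewrite mulrBr.
ring.
Qed.

Lemma fspan_ge (R : realFieldType) (S : finType) (f : S -> R) s t :
  f s - f t <= fspan f.
Proof.
rewrite /fspan.
apply: le_trans (le_bigmax _ (fun s' => \big[Num.max/0]_t' (f s' - f t')) s).
exact: (le_bigmax _ (fun t' => f s - f t') t).
Qed.

Lemma fspan_ge0 (R : realFieldType) (S : finType) (f : S -> R) : 0 <= fspan f.
Proof. by rewrite /fspan bigmax_idl le_max lexx. Qed.

Lemma pairs (R : realFieldType) (S A : finType) (M : mdp R S A)
  (k m : nat) (v : nat -> S -> R) (pi : nat -> S -> A) (eps : nat -> S -> R)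
  (vstar : S -> R) :
  is_mdp M -> (m <= k)%N ->
  avi_run M k v pi eps -> is_optimal_value M vstar ->
  forall j, (j < k)%N -> forall s t,
  (vstar s - v j s) + (v j t - Tcycle M pi k m (j - (k - m)) vstar t)
   <= gamma M ^+ j * fspan (fun s => vstar s - v 0%N s)
      + (1 - gamma M ^+ j) / (1 - gamma M) * \big[Num.max/0]_(1 <= j < k) fspan (eps j).
Proof.
move=> [p0 [p1 [g0 g1]]] Hmk [Hgr Hv] Hopt.
set e := \big[Num.max/0]_(1 <= j < k) fspan (eps j).
set g := gamma M.
set D := fspan _.
have g1' : 1 - g != 0 by rewrite subr_eq0 eq_sym lt_eqF.
elim=> [|j IH] Hj s t.
  rewrite sub0n /= expr0 subrr !mul0r addr0 mul1r.
  have := fspan_ge (fun s => vstar s - v 0%N s) s t; rewrite -/D.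
  lra.
have Hjk : (j < k)%N by lia.
have {}IH := IH Hjk.
have Hvj := Hv j Hj.
have Hgj := Hgr j Hjk.
have [[a Ha] Hma] := Hopt s.
have HX : vstar s - v j.+1 s <=
   g * (\sum_u trans M s a u * (vstar u - v j u)) - eps j.+1 s.
  rewrite Hvj /= -qval_diff -Ha.
  have := (Hgj s).2 a; rewrite /Tpi; lra.
have HY : v j.+1 t - Tcycle M pi k m (j.+1 - (k - m)) vstar t <=
   g * (\sum_u trans M t (pi j.+1 t) u * (v j u - Tcycle M pi k m (j - (k - m)) vstar u))
   + eps j.+1 t.
  rewrite -qval_diff Hvj /=.
  case: (ltnP j (k - m)) => Hjm.
    have -> : (j.+1 - (k - m) = 0)%N by lia.
    have -> : (j - (k - m) = 0)%N by lia.
    have := (Hopt t).2 (pi j.+1 t); rewrite /Tpi /=; lra.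
  have -> : (j.+1 - (k - m) = (j - (k - m)).+1)%N by lia.
  rewrite /=; set jj := (k - m + 1 + _)%N; have -> : jj = j.+1 by rewrite /jj; lia.
  rewrite /= /Tpi; lra.
have He : eps j.+1 t - eps j.+1 s <= e.
  apply: le_trans (fspan_ge _ t s) _.
  rewrite /e; apply: (@le_bigmax_seq _ _ _ (index_iota 1 k) 0 j.+1 xpredT (fun j => fspan (eps j))) => //.
  rewrite mem_index_iota; lia.
have Hp := pair_dist (p0 s a) (p1 s a) (p0 t (pi j.+1 t)) (p1 t (pi j.+1 t)) IH.
have Hc : g * (g ^+ j * D + (1 - g ^+ j) / (1 - g) * e) + e
   = g ^+ j.+1 * D + (1 - g ^+ j.+1) / (1 - g) * e.
  rewrite exprS; field => //.
rewrite -Hc.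
set P1 := \sum_u _ in HX Hp.
set P2 := \sum_u _ in HY Hp.
set c := _ + _ * e in Hp *.
have : g * (P1 + P2) <= g * c by apply: ler_wpM2l.
lra.
Qed.

Lemma tcycle_le (R : realFieldType) (S A : finType) (M : mdp R S A)
  (pi : nat -> S -> A) (k m : nat) (vstar : S -> R) :
  is_mdp M -> is_optimal_value M vstar ->
  forall i s, 0 <= vstar s - Tcycle M pi k m i vstar s.
Proof.
move=> [p0 [p1 [g0 g1]]] Hopt; elim=> [|i IH] s /=; first by rewrite subrr.
rewrite /Tpi.
set a := pi _ s.
have H1 := (Hopt s).2 a.
have := qval_diff M vstar (Tcycle M pi k m i vstar) s a.
have : 0 <= \sum_u trans M s a u * (vstar u - Tcycle M pi k m i vstar u).
  by apply: sum_dist_ge.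
move=> H2 H3.
have : 0 <= gamma M * \sum_u trans M s a u * (vstar u - Tcycle M pi k m i vstar u)
  by apply: mulr_ge0.
lra.
Qed.

Lemma tcycle_diff (R : realFieldType) (S A : finType) (M : mdp R S A)
  (pi : nat -> S -> A) (k m : nat) (x y : S -> R) (a b : R) :
  is_mdp M -> (forall u, a <= x u - y u <= b) ->
  forall i s, gamma M ^+ i * a <= Tcycle M pi k m i x s - Tcycle M pi k m i y s
    <= gamma M ^+ i * b.
Proof.
move=> [p0 [p1 [g0 g1]]] Hab; elim=> [|i IH] s /=; first by rewrite !mul1r Hab.
rewrite /Tpi qval_diff !exprS -!mulrA.
apply/andP; split; apply: ler_wpM2l => //.
  by apply: sum_dist_ge => // u; case/andP: (IH u).
by apply: sum_dist_le => // u; case/andP: (IH u).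
Qed.

Lemma final_bound (R : realFieldType) (S A : finType) (M : mdp R S A)
  (k m : nat) (v : nat -> S -> R) (pi : nat -> S -> A) (eps : nat -> S -> R)
  (vstar : S -> R) :
  is_mdp M -> (1 <= k)%N -> (1 <= m)%N -> (m <= k)%N ->
  avi_run M k v pi eps -> is_optimal_value M vstar ->
  forall s, vstar s - Tcycle M pi k m m vstar s <=
   gamma M * (gamma M ^+ k.-1 * fspan (fun s => vstar s - v 0%N s)
      + (1 - gamma M ^+ k.-1) / (1 - gamma M) * \big[Num.max/0]_(1 <= j < k) fspan (eps j)).
Proof.
move=> HM Hk Hm Hmk Havi Hopt s.
have HP := pairs HM Hmk Havi Hopt.
case: HM => [p0 [p1 [g0 g1]]].
case: m Hm Hmk HP => [//|m'] _ Hmk HP.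
have Hk1 : (k.-1 < k)%N by lia.
have {}HP := HP _ Hk1.
have E0 : (k.-1 - (k - m'.+1) = m')%N by lia.
rewrite E0 in HP.
rewrite /=; set jj := (k - m'.+1 + 1 + m')%N; have -> : jj = k by rewrite /jj; lia.
have [[a Ha] _] := Hopt s.
have Hgk := (proj1 Havi) _ Hk1.
have Hk' : k.-1.+1 = k by lia.
rewrite Hk' in Hgk.
have H1 := (Hgk s).2 a.
have E1 := qval_diff M vstar (v k.-1) s a.
have E2 := qval_diff M (v k.-1) (Tcycle M pi k m'.+1 m' vstar) s (pi k s).
have Hp := pair_dist (p0 s a) (p1 s a) (p0 s (pi k s)) (p1 s (pi k s)) HP.
set P1 := \sum_u _ in E1 Hp.
set P2 := \sum_u _ in E2 Hp.
set c := _ + _ * _ in Hp *.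
have : gamma M * (P1 + P2) <= gamma M * c by apply: ler_wpM2l.
rewrite /Tpi in H1 *.
lra.
Qed.

Theorem theorem2 (R : realFieldType) (S A : finType) (M : mdp R S A)
  (k m : nat) (v : nat -> S -> R) (pi : nat -> S -> A) (eps : nat -> S -> R)
  (vstar vpi : S -> R) :
  is_mdp M ->
  (1 <= k)%N -> (1 <= m)%N -> (m <= k)%N ->
  avi_run M k v pi eps ->
  is_optimal_value M vstar ->
  is_periodic_value M pi k m vpi ->
  let epsilon := \big[Num.max/0]_(1 <= j < k) fspan (eps j) in
  let g := gamma M in
  sup_norm (fun s => vstar s - vpi s)
    <= (1 - g ^+ m)^-1 *
       ((g - g ^+ k) / (1 - g) * epsilon + g ^+ k * fspan (fun s => vstar s - v 0%N s)).
Proof.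
move=> HM Hk Hm Hmk Havi Hopt Hper; cbv zeta.
set epsilon := \big[Num.max/0]_(1 <= j < k) fspan (eps j).
set g := gamma M.
have Hfin := final_bound HM Hk Hm Hmk Havi Hopt.
have Hnn := tcycle_le pi k m HM Hopt m.
have HM' := HM; case: HM' => [p0 [p1 [g0 g1]]].
rewrite -/g -/epsilon in Hfin.
set D := fspan _ in Hfin *.
set B := (g - g ^+ k) / (1 - g) * epsilon + g ^+ k * D.
have g1' : 1 - g != 0 by rewrite subr_eq0 eq_sym lt_eqF.
have HB : forall s, vstar s - Tcycle M pi k m m vstar s <= B.
  move=> s; apply: le_trans (Hfin s) _; rewrite le_eqVlt; apply/orP; left; apply/eqP.
  rewrite /B; case: (k) Hk => [//|k'] _ /=; rewrite exprS; field => //.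
have e0 : 0 <= epsilon by rewrite /epsilon bigmax_idl le_max lexx.
have D0 : 0 <= D by apply: fspan_ge0.
set G := g ^+ m.
have G0 : 0 <= G by apply: exprn_ge0.
have G1 : G < 1 by rewrite /G exprn_ilt1 //; lia.
have gk : g ^+ k <= g.
  case: (k) Hk => [//|k'] _; rewrite exprS.
  have := ler_wpM2l g0 (exprn_ile1 k' g0 (ltW g1)); rewrite mulr1 //.
have B0 : 0 <= B.
  rewrite /B; apply: addr_ge0; apply: mulr_ge0 => //; last exact: exprn_ge0.
  apply: divr_ge0; [lra| by apply: ltW; rewrite subr_gt0].
have iG0 : 0 < (1 - G)^-1 by rewrite invr_gt0; lra.
have Hper' : forall u, vpi u = Tcycle M pi k m m vpi u by move=> u; rewrite {1}Hper.
rewrite /sup_norm; apply: bigmax_le => [|s _].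
  by apply: mulr_ge0 => //; apply: ltW.
set d := fun s => vstar s - vpi s.
have [tM HtM] := ex_max s d.
have [tm Htm] := ex_min s d.
have Hab : forall u, d tm <= vstar u - vpi u <= d tM.
  by move=> u; rewrite Htm HtM.
have Hd := tcycle_diff pi k m HM Hab m.
have Hdec : forall u, d u = (vstar u - Tcycle M pi k m m vstar u)
    + (Tcycle M pi k m m vstar u - Tcycle M pi k m m vpi u).
  by move=> u; rewrite /d (Hper' u); ring.
have Hb : d tM * (1 - G) <= B.
  have := Hdec tM; have := HB tM; case/andP: (Hd tM) => _; rewrite -/g -/G.
  move=> h1 h2 h3; lra.
have Ha : 0 <= d tm * (1 - G).
  have := Hdec tm; have := Hnn tm; case/andP: (Hd tm); rewrite -/g -/G.
  move=> h1 _ h2 h3; lra.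
have Ha' : 0 <= d tm.
  by move: Ha; rewrite pmulr_lge0 //; lra.
have Hb' : d tM <= (1 - G)^-1 * B.
  have -> : d tM = (1 - G)^-1 * (d tM * (1 - G)) by field; lra.
  by apply: ler_wpM2l => //; apply: ltW.
change (`|d s| <= (1 - G)^-1 * B).
have h1 := Htm s; have h2 := HtM s.
rewrite ger0_norm; [lra | ].
by apply: le_trans Ha' (Htm s).
Qed.
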